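(* Let $K\ge1$ and for each $k\in\{1,\dots,K\}$ let $P_{\max,k}>0$, $\mu_k\ge1$, $\Psi_k>0$. Let $q_k^+,q_k^-,c_k^+,c_k^-:\mathbb{R}_+^K\to\mathbb{R}_+$ be differentiable concave functions, and define $$\mathrm{WMEE}(\mathbf p)=\min_{k=1,\dots,K}\frac{q_k^+(\mathbf p)-q_k^-(\mathbf p)}{\mu_kp_k+\Psi_k}.$$ Consider the problem (P): maximize $\mathrm{WMEE}(\mathbf p)$ subject to $0\le p_k\le P_{\max,k}$ and $c_k^+(\mathbf p)-c_k^-(\mathbf p)\ge0$ for all $k$. For a given $\mathbf p_j$, let $\mathcal G_j$ be the problem $$\max_{\mathbf p}\ \min_{k=1,\dots,K}\frac{q_k^+(\mathbf p)-\big[q_k^-(\mathbf p_j)+(\nabla_{\mathbf p}q_k^-(\mathbf p_j))^T(\mathbf p-\mathbf p_j)\big]}{\mu_kp_k+\Psi_k}$$ subject to $0\le p_k\le P_{\max,k}$ and $c_k^+(\mathbf p)-\big[c_k^-(\mathbf p_j)+(\nabla_{\mathbf p}c_k^-(\mathbf p_j))^T(\mathbf p-\mathbf p_j)\big]\ge0$ for all $k$, and let $\mathbf p_j^\star$ denote an optimal solution of $\mathcal G_j$. Let $\mathbf p_0$ be any feasible point of (P) and set $\mathbf p_j=\mathbf p_{j-1}^\star$ for all $j\ge1$. Then the sequence $\{\mathrm{WMEE}(\mathbf p_j^\star)\}_j$ is monotonically increasing and converges.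
   Context: $\nabla_{\mathbf p}f(\mathbf p_j)$ denotes the gradient of $f$ with respect to $\mathbf p$ evaluated at $\mathbf p_j$. The problem (P) models (minimum) energy efficiency maximization, where $q_k^+-q_k^-$ is the achievable rate of link $k$ and $c_k^+-c_k^-\ge0$ are additional constraints. *)

(* Defs.v *)
From HB Require Import structures.
From mathcomp Require Import all_boot all_order all_algebra.
From mathcomp Require Import all_classical all_reals all_analysis.
Set Implicit Arguments. Unset Strict Implicit. Unset Printing Implicit Defensive.
Import Order.TTheory GRing.Theory Num.Theory.
Local Open Scope ring_scope.

Section Defs.
Variables (R : realType) (K : nat).

Definition vec := 'I_K -> R.

Definition vadd (u v : vec) : vec := fun k => u k + v k.
Definition vsub (u v : vec) : vec := fun k => u k - v k.
Definition vcomb (t : R) (u v : vec) : vec := fun k => t * u k + (1 - t) * v k.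
Definition dot (u v : vec) : R := \sum_(k < K) u k * v k.
Definition enorm (u : vec) : R := Num.sqrt (\sum_(k < K) u k ^+ 2).

Definition orthant (p : vec) : Prop := forall k, 0 <= p k.

Definition nonneg_on (f : vec -> R) : Prop := forall p, orthant p -> 0 <= f p.

Definition concave_on (f : vec -> R) : Prop :=
  forall p q t, orthant p -> orthant q -> 0 <= t <= 1 ->
    t * f p + (1 - t) * f q <= f (vcomb t p q).

(* g is the gradient of f on R_+^K: Frechet differentiability at every point
   of the orthant, relative to the orthant *)
Definition is_gradient_on (f : vec -> R) (g : vec -> vec) : Prop :=
  forall p, orthant p -> forall e : R, 0 < e -> exists2 d : R, 0 < d &
    forall h, orthant (vadd p h) -> enorm h < d ->
      `|f (vadd p h) - f p - dot (g p) h| <= e * enorm h.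

Definition linz (f : vec -> R) (g : vec -> vec) (pj p : vec) : R :=
  f pj + dot (g pj) (vsub p pj).

End Defs.

Section Problem.
Variables (R : realType) (n : nat).
Local Notation K := n.+1.
Variables (Pmax mu Psi : 'I_K -> R)
  (qp qm cp cm : 'I_K -> vec R K -> R).

Definition minK (F : 'I_K -> R) : R := \big[Num.min/F ord0]_(k < K) F k.

Definition WMEE (p : vec R K) : R :=
  minK (fun k => (qp k p - qm k p) / (mu k * p k + Psi k)).

Definition feasP (p : vec R K) : Prop :=
  forall k, 0 <= p k <= Pmax k /\ 0 <= cp k p - cm k p.

Variables (gqm gcm : 'I_K -> vec R K -> vec R K).

Definition objG (pj p : vec R K) : R :=
  minK (fun k => (qp k p - linz (qm k) (gqm k) pj p) / (mu k * p k + Psi k)).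

Definition feasG (pj p : vec R K) : Prop :=
  forall k, 0 <= p k <= Pmax k /\ 0 <= cp k p - linz (cm k) (gcm k) pj p.

Definition optimalG (pj pstar : vec R K) : Prop :=
  feasG pj pstar /\ forall p, feasG pj p -> objG pj p <= objG pj pstar.

End Problem.

(* Main.v *)
Require Import Defs.
From HB Require Import structures.
From mathcomp Require Import all_boot all_order all_algebra.
From mathcomp Require Import all_classical all_reals all_analysis.
From mathcomp Require Import ring lra.
Import Order.TTheory GRing.Theory Num.Theory numFieldNormedType.Exports.
Local Open Scope classical_set_scope.
Local Open Scope ring_scope.
Set Implicit Arguments. Unset Strict Implicit.

Lemma le0_eps (R : realType) (x : R) : (forall e : R, 0 < e -> x <= e) -> x <= 0.
Proof.
move=> H; rewrite leNgt; apply/negP => hx.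
have := H (x / 2) ltac:(lra). lra.
Qed.

Lemma enorm_scale (R : realType) (K : nat) (t : R) (h : vec R K) : 0 <= t ->
  enorm (fun k => t * h k) = t * enorm h.
Proof.
move=> t0; rewrite /enorm.
have -> : \sum_(k < K) (t * h k) ^+ 2 = t ^+ 2 * \sum_(k < K) h k ^+ 2.
  by rewrite big_distrr; apply: eq_bigr => k _; rewrite exprMn.
by rewrite sqrtrM ?sqr_ge0 // sqrtr_sqr ger0_norm.
Qed.

Lemma enorm_ge0 (R : realType) (K : nat) (h : vec R K) : 0 <= enorm h.
Proof. exact: sqrtr_ge0. Qed.

Lemma dot_scale (R : realType) (K : nat) (t : R) (g h : vec R K) :
  dot g (fun k => t * h k) = t * dot g h.
Proof. rewrite /dot big_distrr; apply: eq_bigr => k _; by rewrite mulrCA. Qed.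

Lemma grad_ineq (R : realType) (K : nat) (f : vec R K -> R) (g : vec R K -> vec R K)
  (p q : vec R K) : concave_on f -> is_gradient_on f g -> orthant p -> orthant q ->
  f p <= linz f g q p.
Proof.
move=> hc hg op oq; rewrite /linz.
set h := vsub p q; set N := enorm h.
have N0 : 0 <= N by exact: enorm_ge0.
suff H : forall e : R, 0 < e -> f p - f q - dot (g q) h <= e * N.
  have : f p - f q - dot (g q) h <= 0.
    apply: le0_eps => e e0.
    have := H (e / (N + 1)) ltac:(apply: divr_gt0; lra).
    move/le_trans; apply.
    rewrite mulrAC ler_pdivrMr; last lra.
    rewrite ler_wpM2l //; lra.
  lra.
move=> e e0.
have [d d0 hd] := hg q oq e e0.
pose t := Num.min 1 (d / (N + 1)).
have t0 : 0 < t by rewrite lt_min ltr01 divr_gt0 //; lra.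
have t1 : t <= 1 by rewrite ge_min lexx.
have td : t <= d / (N + 1) by rewrite ge_min lexx orbT.
pose ht := fun k => t * h k.
have Ev : vadd q ht = vcomb t p q.
  apply: funext => k; rewrite /vadd /ht /vcomb /h /vsub; ring.
have oth : orthant (vadd q ht).
  rewrite Ev => k; rewrite /vcomb; have := op k; have := oq k; nra.
have nht : enorm ht = t * N by rewrite /ht enorm_scale //; lra.
have hlt : enorm ht < d.
  rewrite nht.
  have : t * N <= d / (N + 1) * N by rewrite ler_wpM2r.
  move/le_lt_trans; apply.
  rewrite mulrAC ltr_pdivrMr; last lra.
  rewrite -subr_gt0; have -> : d * (N + 1) - d * N = d by ring. done.
have := hd _ oth hlt.
rewrite nht /ht dot_scale Ev => habs.
have hcv := hc p q t op oq ltac:(apply/andP; split; lra).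
have := ler_norm (f (vcomb t p q) - f q - t * dot (g q) h).
move=> /le_trans /(_ habs) hb.
have : t * (f p - f q - dot (g q) h) <= t * (e * N) by lra.
by rewrite ler_pM2l.
Qed.

Lemma bigmin_le_seq (R : realType) (I : eqType) (s : seq I) (x0 : R) (F : I -> R) k :
  k \in s -> \big[Num.min/x0]_(i <- s) F i <= F k.
Proof.
elim: s => [//|a s IH]; rewrite inE big_cons => /orP [/eqP ->|ks].
  by rewrite ge_min lexx.
by rewrite ge_min IH // orbT.
Qed.

Lemma minK_le (R : realType) (n : nat) (F : 'I_n.+1 -> R) k : minK F <= F k.
Proof. exact: bigmin_le_seq (mem_index_enum k). Qed.

Lemma le_minK (R : realType) (n : nat) (F : 'I_n.+1 -> R) x :
  (forall k, x <= F k) -> x <= minK F.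
Proof.
move=> H; rewrite /minK; apply: (big_ind (fun y => x <= y)) => //.
by move=> a b ha hb; rewrite le_min ha hb.
Qed.

Lemma minK_mono (R : realType) (n : nat) (F G : 'I_n.+1 -> R) :
  (forall k, F k <= G k) -> minK F <= minK G.
Proof. move=> H; apply: le_minK => k; apply: le_trans (minK_le F k) _; exact: H. Qed.

Lemma linz_self (R : realType) (K : nat) (f : vec R K -> R) g p : linz f g p p = f p.
Proof.
rewrite /linz /dot big1 ?addr0 // => k _; rewrite /vsub subrr mulr0 //.
Qed.

Theorem proposition7 (R : realType) (n : nat)
  (Pmax mu Psi : 'I_n.+1 -> R)
  (hPmax : forall k, 0 < Pmax k) (hmu : forall k, 1 <= mu k)
  (hPsi : forall k, 0 < Psi k)
  (qp qm cp cm : 'I_n.+1 -> vec R n.+1 -> R)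
  (gqp gqm gcp gcm : 'I_n.+1 -> vec R n.+1 -> vec R n.+1)
  (hqp : forall k, [/\ nonneg_on (qp k), concave_on (qp k) & is_gradient_on (qp k) (gqp k)])
  (hqm : forall k, [/\ nonneg_on (qm k), concave_on (qm k) & is_gradient_on (qm k) (gqm k)])
  (hcp : forall k, [/\ nonneg_on (cp k), concave_on (cp k) & is_gradient_on (cp k) (gcp k)])
  (hcm : forall k, [/\ nonneg_on (cm k), concave_on (cm k) & is_gradient_on (cm k) (gcm k)])
  (p0 : vec R n.+1) (pstar : nat -> vec R n.+1)
  (hp0 : feasP Pmax cp cm p0)
  (hopt0 : optimalG Pmax mu Psi qp qm cp cm gqm gcm p0 (pstar 0%N))
  (hopt : forall j : nat,
     optimalG Pmax mu Psi qp qm cp cm gqm gcm (pstar j) (pstar j.+1)) :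
  (forall j : nat, WMEE mu Psi qp qm (pstar j) <= WMEE mu Psi qp qm (pstar j.+1))
  /\ exists l : R, WMEE mu Psi qp qm (pstar j) @[j --> \oo] --> l.
Proof.
have fP_orth : forall p, feasP Pmax cp cm p -> orthant p.
  by move=> p hp k; case: (hp k) => /andP[] .
have fG_fP : forall pj p, orthant pj -> feasG Pmax cp cm gcm pj p -> feasP Pmax cp cm p.
  move=> pj p oj hp k; case: (hp k) => hb hc; split => //.
  have op : orthant p by move=> i; case: (hp i) => /andP[].
  case: (hcm k) => _ cc cg.
  have := grad_ineq cc cg op oj; lra.
have fP_fG : forall p, feasP Pmax cp cm p -> feasG Pmax cp cm gcm p p.
  by move=> p hp k; rewrite linz_self; exact: hp.
have D0 : forall p k, orthant p -> 0 < mu k * p k + Psi k.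
  move=> p k op; have := op k; have := hmu k; have := hPsi k; nra.
have objG_le : forall pj p, orthant pj -> orthant p ->
    objG mu Psi qp qm gqm pj p <= WMEE mu Psi qp qm p.
  move=> pj p oj op; apply: minK_mono => k.
  apply: ler_wpM2r; first by rewrite invr_ge0 ltW // D0.
  case: (hqm k) => _ cc cg.
  have := grad_ineq cc cg op oj; lra.
have objG_self : forall p, objG mu Psi qp qm gqm p p = WMEE mu Psi qp qm p.
  move=> p; rewrite /objG /WMEE.
  have -> : (fun k => (qp k p - linz (qm k) (gqm k) p p) / (mu k * p k + Psi k))
     = (fun k => (qp k p - qm k p) / (mu k * p k + Psi k)).
    by apply: funext => k; rewrite linz_self.
  by [].
have feas : forall j, feasP Pmax cp cm (pstar j).
  elim=> [|j IH]; first exact: (fG_fP p0 _ (fP_orth _ hp0) hopt0.1).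
  exact: (fG_fP (pstar j) _ (fP_orth _ IH) (hopt j).1).
have mono : forall j, WMEE mu Psi qp qm (pstar j) <= WMEE mu Psi qp qm (pstar j.+1).
  move=> j; rewrite -objG_self.
  apply: le_trans (objG_le _ _ (fP_orth _ (feas j)) (fP_orth _ (feas j.+1))).
  exact: (hopt j).2 _ (fP_fG _ (feas j)).
split => //.
pose z : vec R n.+1 := fun _ => 0.
have oz : orthant z by move=> k; rewrite /z.
pose B0 := qp ord0 z + \sum_(i < n.+1) `|gqp ord0 z i| * Pmax i.
have bnd : forall p, feasP Pmax cp cm p -> WMEE mu Psi qp qm p <= `|B0| / Psi ord0.
  move=> p hp; have op := fP_orth _ hp.
  apply: le_trans (minK_le _ ord0) _.
  set N := qp ord0 p - qm ord0 p.
  have NB : N <= B0.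
    case: (hqp ord0) => _ cc cg; case: (hqm ord0) => nn _ _.
    have h1 := grad_ineq cc cg op oz; have h2 := nn p op.
    have h3 : dot (gqp ord0 z) (vsub p z) <= \sum_(i < n.+1) `|gqp ord0 z i| * Pmax i.
      apply: ler_sum => i _; rewrite /vsub /z subr0.
      apply: le_trans (ler_norm _) _; rewrite normrM (ger0_norm (op i)).
      apply: ler_wpM2l => //; by case: (hp i) => /andP[].
    rewrite /N /B0; move: h1; rewrite /linz; lra.
  have Dp := D0 p ord0 op.
  have DP : Psi ord0 <= mu ord0 * p ord0 + Psi ord0.
    have := op ord0; have := hmu ord0; nra.
  have hP := hPsi ord0.
  case: (lerP N 0) => hN.
    apply: (@le_trans _ _ 0).
      by rewrite mulr_le0_ge0 // invr_ge0 ltW.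
    by apply: divr_ge0 => //; apply: ltW.
  rewrite ler_pdivrMr // mulrAC ler_pdivlMr //.
  have : N * Psi ord0 <= N * (mu ord0 * p ord0 + Psi ord0) by rewrite ler_wpM2l // ltW.
  move/le_trans; apply; apply: ler_wpM2r; first exact: ltW.
  by apply: le_trans NB (ler_norm _).
exists (sup (range (fun j => WMEE mu Psi qp qm (pstar j)))).
apply: nondecreasing_cvgn; first exact/nondecreasing_seqP.
exists (`|B0| / Psi ord0) => x [j _ <-]; exact: bnd.
Qed.
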